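(* Let $L_1:\Delta_K\times\mathcal{Y}\to\mathbb{R}_+$ be a level-1 loss function satisfying, for every $Q\in\Delta_K^{(2)}$ and every $y\in\mathcal{Y}$, $$L_1\big(\mathbb{E}_{\theta\sim Q}\,\theta,\;y\big)\;\le\;\mathbb{E}_{\theta\sim Q}\,L_1(\theta,y)$$ (for example, any loss that is convex in its first argument, such as the Brier score or the log-loss). Then the level-2 loss $$L_2(Q,y)\;=\;\mathbb{E}_{\theta\sim Q}\,L_1(\theta,y),\qquad Q\in\Delta_K^{(2)},\ y\in\mathcal{Y},$$ is not appropriate. In fact, for every sample size $N$ and every sample $y^{(1)},\dots,y^{(N)}$, an empirical loss minimiser of $\sum_{n=1}^N L_2(Q,y^{(n)})$ over $Q\in\Delta_K^{(2)}$ is attained by a Dirac measure $\delta_{\tilde\theta}$ for some $\tilde\theta\in\Delta_K$.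
   Context: $\mathcal{Y}=\{y_1,\dots,y_K\}$ is a finite label set, $\Delta_K=\{\theta\in[0,1]^K:\|\theta\|_1=1\}$ is the probability simplex identified with the set of probability distributions on $\mathcal{Y}$ (with $\theta(y)=\theta_k$ if $y=y_k$), and $\Delta_K^{(2)}$ denotes the set of probability distributions on $\Delta_K$ (''level-2 distributions''). $\delta_\theta$ denotes the Dirac measure at $\theta\in\Delta_K$. Definition (appropriate level-2 loss). Let $U:\Delta_K^{(2)}\to\mathbb{R}$ be an uncertainty measure, assumed non-constant, maximal at the uniform distribution on $\Delta_K$ and minimal (with a common value) at all Dirac measures. A level-2 loss $L_2:\Delta_K^{(2)}\times\mathcal{Y}\to\mathbb{R}$ is called appropriate if for every ground truth $\theta^*\in\Delta_K$ and every i.i.d. sequence $y^{(1)},y^{(2)},\dots$ with $y^{(i)}\sim\theta^*$, the empirical loss minimiser $Q^{(N)}=\operatorname{argmin}_{Q\in\Delta_K^{(2)}}\sum_{n=1}^N L_2(Q,y^{(n)})$ satisfies: (A1) for every $N$, $\mathbb{E}_{y^{(1:N)}}\big[U(Q^{(N)})\big]\ge\mathbb{E}_{y^{(1:N+1)}}\big[U(Q^{(N+1)})\big]$, and there exist $\tilde N$ and $k$ with $\mathbb{E}_{y^{(1:\tilde N)}}\big[U(Q^{(\tilde N)})\big]>\mathbb{E}_{y^{(1:\tilde N+k)}}\big[U(Q^{(\tilde N+k)})\big]$; (A2) $Q^{(N)}\to\delta_{\theta^*}$ in probability as $N\to\infty$. *)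

(* Defs.v *)
From HB Require Import structures.
From mathcomp Require Import all_boot all_order all_algebra.
From mathcomp Require Import all_classical all_reals all_analysis.
Unset Printing Implicit Defensive.
Import Order.TTheory GRing.Theory Num.Theory.
Import numFieldNormedType.Exports.
Local Open Scope classical_set_scope.
Local Open Scope ring_scope.

(* Labels y_1..y_K are 'I_K; theta in Delta_K is a K.-tuple of reals,
   theta(y) = tnth theta y.  Level-2 distributions are probability measures
   on R^K (product sigma-algebra, i.e. Borel) concentrated on Delta_K. *)

Section Defs.
Context {R : realType}.

Definition simplex (K : nat) : set (K.-tuple R) :=
  [set t | (forall i, 0 <= tnth t i) /\ \sum_(i < K) tnth t i = 1].

Definition level2 {K : nat} (Q : probability (K.-tuple R) R) : Prop :=
  Q (simplex K) = 1%E.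

Definition mean {K : nat} (Q : probability (K.-tuple R) R) : K.-tuple R :=
  [tuple fine (\int[Q]_(x in simplex K) (tnth x i)%:E) | i < K].

Definition L2_of {K : nat} (L1 : K.-tuple R -> 'I_K -> R)
  (Q : probability (K.-tuple R) R) (y : 'I_K) : \bar R :=
  \int[Q]_(x in simplex K) (L1 x y)%:E.

Definition emp_loss {K : nat}
  (L2 : probability (K.-tuple R) R -> 'I_K -> \bar R)
  {N : nat} (ys : 'I_N -> 'I_K) (Q : probability (K.-tuple R) R) : \bar R :=
  (\sum_(n < N) L2 Q (ys n))%E.

Definition is_emp_minimiser {K : nat}
  (L2 : probability (K.-tuple R) R -> 'I_K -> \bar R)
  {N : nat} (ys : 'I_N -> 'I_K) (Q : probability (K.-tuple R) R) : Prop :=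
  level2 Q /\
  forall Q' : probability (K.-tuple R) R, level2 Q' ->
    (emp_loss L2 ys Q <= emp_loss L2 ys Q')%E.

Fixpoint iterint {n : nat} : (n.-tuple R -> \bar R) -> \bar R :=
  match n return (n.-tuple R -> \bar R) -> \bar R with
  | 0 => fun f => f [tuple]
  | n'.+1 => fun f =>
      (\int[lebesgue_measure]_x iterint (fun t : n'.-tuple R => f (cons_tuple x t)))%E
  end.

Definition extend_last {k : nat} (x : k.-tuple R) : k.+1.-tuple R :=
  [tuple of rcons x (1 - \sum_(i < k) tnth x i)].

(* Q is the uniform distribution on Delta_K: the push-forward of the
   normalised Lebesgue measure on {x in R^(K-1) | x >= 0, sum x <= 1}
   (volume 1/(K-1)!) by x |-> (x, 1 - sum x). *)
Definition is_uniform_simplex (K : nat) : probability (K.-tuple R) R -> Prop :=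
  match K return probability (K.-tuple R) R -> Prop with
  | 0 => fun _ => False
  | k.+1 => fun Q => forall A : set (k.+1.-tuple R), measurable A ->
      Q A = ((k`!)%:R%:E *
        iterint (fun x : k.-tuple R =>
          (\1_[set z : k.-tuple R | (forall i, 0 <= tnth z i) /\
                 \sum_(i < k) tnth z i <= 1 /\ A (extend_last z)] x)%:E))%E
  end.

Definition uncertainty_measure {K : nat} (U : probability (K.-tuple R) R -> R)
  : Prop :=
  [/\ exists Q1 Q2 : probability (K.-tuple R) R,
        [/\ level2 Q1, level2 Q2 & U Q1 <> U Q2],
      forall Qu : probability (K.-tuple R) R, is_uniform_simplex K Qu ->
        forall Q : probability (K.-tuple R) R, level2 Q -> U Q <= U Qu
    & exists c : R,
        (forall th, simplex K th -> U (dirac th : probability _ R) = c) /\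
        (forall Q : probability (K.-tuple R) R, level2 Q -> c <= U Q)].

Definition sample_prob {K N : nat} (ths : K.-tuple R) (ys : {ffun 'I_N -> 'I_K})
  : R := \prod_(n < N) tnth ths (ys n).

Definition exp_unc {K : nat} (U : probability (K.-tuple R) R -> R)
  (Qsel : forall N, ('I_N -> 'I_K) -> probability (K.-tuple R) R)
  (ths : K.-tuple R) (N : nat) : R :=
  \sum_(ys : {ffun 'I_N -> 'I_K}) sample_prob ths ys * U (Qsel N ys).

Definition cont_on_simplex {K : nat} (f : K.-tuple R -> R) : Prop :=
  forall x, simplex K x -> forall e : R, 0 < e -> exists2 d : R, 0 < d &
    forall z, simplex K z -> (forall i, `|tnth x i - tnth z i| < d) ->
      `|f x - f z| < e.

(* Q^(N) -> delta_{theta*} in probability, w.r.t. the weak topology on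
   level-2 distributions (test functions: continuous functions on the
   compact Delta_K) *)
Definition cvg_in_prob_dirac {K : nat}
  (Qsel : forall N, ('I_N -> 'I_K) -> probability (K.-tuple R) R)
  (ths : K.-tuple R) : Prop :=
  forall f : K.-tuple R -> R, cont_on_simplex f ->
  forall eps : R, 0 < eps ->
    (fun N : nat => \sum_(ys : {ffun 'I_N -> 'I_K} |
        (eps%:E <= `| \int[Qsel N ys]_(x in simplex K) (f x)%:E
                       - (f ths)%:E |)%E) sample_prob ths ys)
      @ \oo --> (0 : R).

Definition A1 {K : nat} (U : probability (K.-tuple R) R -> R)
  (Qsel : forall N, ('I_N -> 'I_K) -> probability (K.-tuple R) R)
  (ths : K.-tuple R) : Prop :=
  (forall N, exp_unc U Qsel ths N.+1 <= exp_unc U Qsel ths N) /\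
  (exists Nt k, exp_unc U Qsel ths (Nt + k) < exp_unc U Qsel ths Nt).

Definition appropriate {K : nat} (U : probability (K.-tuple R) R -> R)
  (L2 : probability (K.-tuple R) R -> 'I_K -> \bar R) : Prop :=
  (forall N (ys : 'I_N -> 'I_K), exists Q, is_emp_minimiser L2 ys Q) /\
  forall ths : K.-tuple R, simplex K ths ->
  forall Qsel : forall N, ('I_N -> 'I_K) -> probability (K.-tuple R) R,
    (forall N (ys : 'I_N -> 'I_K), is_emp_minimiser L2 ys (Qsel N ys)) ->
    A1 U Qsel ths /\ cvg_in_prob_dirac Qsel ths.

End Defs.

(* Main.v *)
Require Import Defs.
From HB Require Import structures.
From mathcomp Require Import all_boot all_order all_algebra.
From mathcomp Require Import all_classical all_reals all_analysis measurable_realfun.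
Import Order.TTheory GRing.Theory Num.Theory.
Import numFieldNormedType.Exports.
Local Open Scope classical_set_scope.
Local Open Scope ring_scope.

Section H.
Context {R : realType}.
Import HBNNSimple.
Import HBNNSimple.
Lemma sintegral_dirac d (T : measurableType d) (a : T) (h : {nnsfun T >-> R}) :
  sintegral (\d_a : set T -> \bar R) h = (h a)%:E.
Proof.
rewrite sintegralE (fsbigD1 (h a))//=; last by exists a.
rewrite diracE mem_set// mule1.
rewrite fsbig1 ?adde0// => r /= [_ rfna].
rewrite diracE memNset ?mule0//=.
exact/nesym.
Qed.
Lemma dirac_int_le K (f : K.-tuple R -> R) (th : K.-tuple R) :
  simplex K th -> (forall x, simplex K x -> 0 <= f x) ->
  (\int[\d_th]_(x in simplex K) (f x)%:E <= (f th)%:E)%E.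
Proof.
move=> Sth f0; rewrite ge0_integralE; last by move=> x Sx; rewrite lee_fin f0.
apply: ge_ereal_sup => _ [h hle <-].
rewrite sintegral_dirac; apply: le_trans (hle th) _.
by rewrite /patch mem_set.
Qed.

Lemma bigsetI_mem (I : eqType) (T : Type) (s : seq I) (F : I -> set T) x :
  (\big[setI/setT]_(i <- s) F i) x <-> (forall i, i \in s -> F i x).
Proof.
elim: s => [|a s IH]; first by rewrite big_nil; split.
rewrite big_cons; split.
  move=> [Fa /IH H] i; rewrite inE => /orP[/eqP->//|]; exact: H.
move=> H; split; first by apply: H; rewrite inE eqxx.
by apply/IH => i iS; apply: H; rewrite inE iS orbT.
Qed.
Lemma measurable_simplex K : measurable (simplex K : set (K.-tuple R)).
Proof.
have -> : simplex K = (\big[setI/setT]_(i < K)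
    ((fun t : K.-tuple R => tnth t i) @^-1` `[0, +oo[)) `&`
    ((fun t : K.-tuple R => \sum_(i < K) tnth t i) @^-1` [set 1]).
  apply/seteqP; split => t.
    move=> [H1 H2]; split => //; apply/bigsetI_mem => i _ /=.
    by rewrite in_itv /= andbT H1.
  move=> [/bigsetI_mem H1 H2]; split => // i.
  by have := H1 i (mem_index_enum _); rewrite /= in_itv /= andbT.
apply: measurableI.
  apply: bigsetI_measurable => i _.
  rewrite -[X in measurable X]setTI.
  by apply: measurable_tnth => //; exact: measurable_itv.
rewrite -[X in measurable X]setTI.
apply: measurable_sum => [i||]; [|exact: measurableT|exact: measurable_set1].
exact: measurable_tnth.
Qed.

Lemma mean_simplex K (Q : probability (K.-tuple R) R) :
  level2 Q -> simplex K (mean Q).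
Proof.
move=> HQ.
have mS := measurable_simplex K.
pose a i := (\int[Q]_(x in simplex K) (tnth x i)%:E)%E.
have a0 i : (0 <= a i)%E.
  by apply: integral_ge0 => x [Sx _]; rewrite lee_fin.
have hsum : (\sum_(i < K) a i = 1)%E.
  rewrite /a -ge0_integral_sum //; last 2 first.
  - by move=> i; apply/measurable_EFinP; apply: measurable_funTS; exact: measurable_tnth.
  - by move=> i x [Sx _]; rewrite lee_fin.
  transitivity (\int[Q]_(x in simplex K) (cst 1%:E x))%E.
    apply: eq_integral => x /set_mem [_ Sx].
    by rewrite sumEFin Sx.
  by rewrite integral_cst // mul1e; exact: HQ.
have afin i : a i \is a fin_num.
  rewrite ge0_fin_numE //; apply: (@le_lt_trans _ _ 1%E); last exact: ltey.
  rewrite -hsum (bigD1 i) //=; apply: leeDl.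
  by apply: sume_ge0 => j _.
split.
  by move=> i; rewrite /mean tnth_mktuple; apply: fine_ge0; exact: a0.
apply: EFin_inj; rewrite -sumEFin -hsum.
apply: eq_bigr => i _; rewrite /mean tnth_mktuple fineK //. exact: afin.
Qed.
Lemma part2 K (L1 : K.-tuple R -> 'I_K -> R)
  (L1_ge0 : forall th y, simplex K th -> 0 <= L1 th y)
  (L1_jensen : forall Q : probability (K.-tuple R) R, level2 Q ->
     forall y : 'I_K, ((L1 (mean Q) y)%:E <= L2_of L1 Q y)%E)
  (N : nat) (ys : 'I_N -> 'I_K) (Q : probability (K.-tuple R) R) :
     is_emp_minimiser (L2_of L1) ys Q ->
     exists th : K.-tuple R, simplex K th /\
       is_emp_minimiser (L2_of L1) ys (dirac th : probability _ R).
Proof.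
move=> [HQ Hmin]; exists (mean Q).
have Sth := mean_simplex _ _ HQ.
split => //; split.
  by rewrite /level2 /= diracE mem_set.
move=> Q' HQ'; apply: le_trans (Hmin Q' HQ').
apply: lee_sum => n _.
apply: le_trans (L1_jensen Q HQ (ys n)).
apply: dirac_int_le => // x Sx; exact: L1_ge0.
Qed.
End H.

Theorem theorem1 (R : realType) (K : nat) (L1 : K.-tuple R -> 'I_K -> R)
  (L1_ge0 : forall th y, simplex K th -> 0 <= L1 th y)
  (L1_jensen : forall Q : probability (K.-tuple R) R, level2 Q ->
     forall y : 'I_K, ((L1 (mean Q) y)%:E <= L2_of L1 Q y)%E) :
  (forall U : probability (K.-tuple R) R -> R, uncertainty_measure U ->
     ~ appropriate U (L2_of L1)) /\
  (forall (N : nat) (ys : 'I_N -> 'I_K) (Q : probability (K.-tuple R) R),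
     is_emp_minimiser (L2_of L1) ys Q ->
     exists th : K.-tuple R, simplex K th /\
       is_emp_minimiser (L2_of L1) ys (dirac th : probability _ R)).
Proof.
have P2 := @part2 R K L1 L1_ge0 L1_jensen.
split; last exact: P2.
move=> U [_ _ [c [Uc _]]] [Hex Hsel].
have Hd : forall N (ys : 'I_N -> 'I_K), {th : K.-tuple R |
    simplex K th /\ is_emp_minimiser (L2_of L1) ys (dirac th : probability _ R)}.
  move=> N ys; apply: cid.
  have [Q HQ] := Hex N ys; exact: P2 HQ.
pose ys0 : 'I_0 -> 'I_K := ffun0 (card_ord 0).
have [th0 [Sth0 _]] := Hd 0%N ys0.
pose Qsel N ys := (dirac (sval (Hd N ys)) : probability _ R).
have [[_ [Nt [k Hlt]]] _] := Hsel th0 Sth0 Qsel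
  (fun N ys => proj2 (svalP (Hd N ys))).
have Hc N : exp_unc U Qsel th0 N = c.
  rewrite /exp_unc.
  transitivity (\sum_(ys : {ffun 'I_N -> 'I_K}) sample_prob th0 ys * c).
    apply: eq_bigr => ys _; congr (_ * _).
    exact: (Uc _ (proj1 (svalP (Hd N ys)))).
  rewrite -mulr_suml /sample_prob.
  have := bigA_distr_bigA (fun (i : 'I_N) (j : 'I_K) => tnth th0 j).
  move=> /= <-.
  have -> : \prod_(i < N) \sum_(j : 'I_K) tnth th0 j = 1.
    by rewrite (proj2 Sth0) big1.
  by rewrite mul1r.
by move: Hlt; rewrite !Hc ltxx.
Qed.
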